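(* Let $n\geq 1$, let $T,T'$ be Jacobi subsets of $S_n$, and let $H\subseteq G$ be subgroups of $S_n$. Then: (1) If $T\cap T'=\emptyset$, then $T\cup T'$ is Jacobi. (2) $\sigma T=\{\sigma\circ\tau\mid \tau\in T\}$ is Jacobi for any $\sigma\in S_n$. (3) If $n\geq 2$, then $T(1,2)=\{\tau\circ(1,2)\mid\tau\in T\}$ is Jacobi, where $(1,2)\in S_n$ is the transposition. (4) If $n\leq m$, then $\iota_{n,m}(T)$ is a Jacobi subset of $S_m$. (5) If $H$ is Jacobi, then $G$ is Jacobi. (6) If $n\geq 2$ and $(1,2)\in G$, then $G$ is Jacobi. (7) If $n\geq 3$ and the $3$-cycle $(1,2,3)\in G$, then $G$ is Jacobi.
   Context: A Lie ring is a Lie algebra over $\mathbb Z$. The left-normed bracket is defined recursively by $[a_1]=a_1$ and $[a_1,\dots,a_n]=[[a_1,\dots,a_{n-1}],a_n]$. $S_n$ is the symmetric group on $\{1,\dots,n\}$, with product given by composition, $(\sigma\tau)(i)=\sigma(\tau(i))$. A subset $T\subseteq S_n$ is called Jacobi if $\sum_{\sigma\in T}[a_{\sigma(1)},\dots,a_{\sigma(n)}]=0$ for all elements $a_1,\dots,a_n$ of every Lie ring. For $n\leq m$, $\iota_{n,m}:S_n\hookrightarrow S_m$ is the canonical embedding (permutations of $\{1,\dots,n\}$ extended by fixing $n+1,\dots,m$). *)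

(* Defs.v *)
From HB Require Import structures.
From mathcomp Require Import all_boot all_order all_algebra all_fingroup.
Set Implicit Arguments. Unset Strict Implicit. Unset Printing Implicit Defensive.
Import GRing.Theory.
Local Open Scope ring_scope.

(* A Lie ring: an abelian group with a biadditive, alternating bracket
   satisfying the Jacobi identity (i.e. a Lie algebra over Z). *)
Record lie_ring := LieRing {
  lr_car :> zmodType;
  lr_br : lr_car -> lr_car -> lr_car;
  lr_brDl : forall x y z : lr_car, lr_br (x + y) z = lr_br x z + lr_br y z;
  lr_brDr : forall x y z : lr_car, lr_br x (y + z) = lr_br x y + lr_br x z;
  lr_brxx : forall x : lr_car, lr_br x x = 0;
  lr_jacobi : forall x y z : lr_car,
    lr_br (lr_br x y) z + lr_br (lr_br y z) x + lr_br (lr_br z x) y = 0 }.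

(* Left-normed bracket [a_1, ..., a_k] = [[a_1,...,a_{k-1}],a_k]; [a_1] = a_1.
   (The empty bracket, never used for n >= 1, is set to 0.) *)
Definition lnbr (L : lie_ring) (s : seq L) : L :=
  if s is x :: s' then foldl (@lr_br L) x s' else 0.

(* Index i : 'I_n stands for the paper's i+1. *)
Definition jacobi (n : nat) (T : {set {perm 'I_n}}) : Prop :=
  forall (L : lie_ring) (a : 'I_n -> L),
    \sum_(s in T) lnbr [seq a (s i) | i <- enum 'I_n] = 0.

(* Composition sigma o tau, i.e. (perm_comp sigma tau) i = sigma (tau i).
   (Note mathcomp's product is (s * t) x = t (s x).) *)
Definition perm_comp (T : finType) (s t : {perm T}) : {perm T} := (t * s)%g.

Lemma perm_compE (T : finType) (s t : {perm T}) x : perm_comp s t x = s (t x).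
Proof. by rewrite /perm_comp permM. Qed.

Definition ext_fun (n m : nat) (H : (n <= m)%N) (s : {perm 'I_n}) (i : 'I_m) : 'I_m :=
  if (insub (val i) : option 'I_n) is Some j then widen_ord H (s j) else i.

Lemma ext_fun_inj (n m : nat) (H : (n <= m)%N) (s : {perm 'I_n}) : injective (@ext_fun n m H s).
Proof.
move=> i j; rewrite /ext_fun.
case: insubP => [i' Hi Ei|Hi]; case: insubP => [j' Hj Ej|Hj].
- move/(congr1 val)=> /= /val_inj /perm_inj Eij.
  by apply: val_inj; rewrite -Ei -Ej Eij.
- by move=> E; move: Hj; rewrite -E /= ltn_ord.
- by move=> E; move: Hi; rewrite E /= ltn_ord.
- by [].
Qed.

Definition iota_perm (n m : nat) (H : (n <= m)%N) (s : {perm 'I_n}) : {perm 'I_m} :=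
  perm (@ext_fun_inj n m H s).

(* Main.v *)
Require Import Defs.
From HB Require Import structures.
From mathcomp Require Import all_boot all_order all_algebra all_fingroup.
From mathcomp Require Import cyclic.
Set Implicit Arguments. Unset Strict Implicit. Unset Printing Implicit Defensive.
Import GRing.Theory.
Local Open Scope group_scope.

Section LieFacts.
Variable L : lie_ring.
Local Notation br := (@lr_br L).
Local Open Scope ring_scope.

Lemma br0l (y : L) : br 0 y = 0.
Proof. by apply: (addrI (br 0 y)); rewrite -lr_brDl !addr0. Qed.
Lemma brNl (x y : L) : br (- x) y = - br x y.
Proof. by apply: (addrI (br x y)); rewrite -lr_brDl !subrr br0l. Qed.
Lemma brC (x y : L) : br y x = - br x y.
Proof.
have := lr_brxx (x + y).
rewrite lr_brDl !lr_brDr !lr_brxx add0r addr0 => E.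
by apply: (addrI (br x y)); rewrite E subrr.
Qed.
Lemma fl_add (r : seq L) (x y : L) : foldl br (x + y) r = foldl br x r + foldl br y r.
Proof. by elim: r x y => //= z r IH x y; rewrite lr_brDl IH. Qed.
Lemma fl0 (r : seq L) : foldl br 0 r = 0.
Proof. by elim: r => //= z r IH; rewrite br0l. Qed.
Lemma flN (r : seq L) (x : L) : foldl br (- x) r = - foldl br x r.
Proof. by elim: r x => //= z r IH x; rewrite brNl IH. Qed.
Lemma fl_sum (I : finType) (A : {pred I}) (F : I -> L) (r : seq L) :
  foldl br (\sum_(i in A) F i) r = \sum_(i in A) foldl br (F i) r.
Proof. exact: (big_morph (fun x => foldl br x r) (fl_add r) (fl0 r)). Qed.
End LieFacts.

Lemma seq_iota (T : Type) n (f : 'I_n.+1 -> T) :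
  [seq f i | i <- enum 'I_n.+1] = [seq f (inord k) | k <- iota 0 n.+1].
Proof.
have E : enum 'I_n.+1 = map inord (iota 0 n.+1).
  by rewrite -val_enum_ord -map_comp (eq_map (fun i => inord_val i)) map_id.
by rewrite E -map_comp.
Qed.

Lemma part1 n (T T' : {set {perm 'I_n}}) : jacobi T -> jacobi T' ->
  T :&: T' = set0 -> jacobi (T :|: T').
Proof.
move=> HT HT' D L a; rewrite (eq_bigl [predU T & T']); last by move=> i; rewrite !inE.
rewrite bigU /=; last by rewrite -setI_eq0 D.
by rewrite HT HT' GRing.addr0.
Qed.

Lemma part2 n (T : {set {perm 'I_n}}) sigma : jacobi T ->
  jacobi [set perm_comp sigma tau | tau in T].
Proof.
move=> HT L a; rewrite big_imset /=; last by move=> x y _ _ /mulIg.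
rewrite -[RHS](HT L (fun j => a (sigma j))); apply: eq_bigr => x _.
by congr lnbr; apply: eq_map => i; rewrite perm_compE.
Qed.

Lemma swap01 (L : lie_ring) n (b : 'I_n.+2 -> L) (h : 1 < n.+2) :
  lnbr [seq b (tperm (Ordinal (ltnW h)) (Ordinal h) i) | i <- enum 'I_n.+2]
  = (- lnbr [seq b i | i <- enum 'I_n.+2])%R.
Proof.
rewrite !seq_iota /=.
have e0 : inord 0 = Ordinal (ltnW h) :> 'I_n.+2 by apply: val_inj; rewrite /= inordK.
have e1 : inord 1 = Ordinal h :> 'I_n.+2 by apply: val_inj; rewrite /= inordK.
rewrite e0 e1 tpermL tpermR brC flN; congr (- foldl _ _ _)%R.
apply/eq_in_map => k; rewrite mem_iota => /andP[k2 kn].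
rewrite tpermD // -val_eqE /= inordK //; case: k k2 {kn} => [|[|k]] //.
Qed.

Lemma part3 n (h : 1 < n) (T : {set {perm 'I_n}}) : jacobi T ->
  jacobi [set perm_comp tau (tperm (Ordinal (ltnW h)) (Ordinal h)) | tau in T].
Proof.
case: n h T => [|[|n]] // h T HT L a.
rewrite big_imset /=; last by move=> x y _ _ /mulgI.
rewrite -[RHS]GRing.oppr0 -[in RHS](HT L a) -sumrN; apply: eq_bigr => x _.
rewrite -(swap01 (fun i => a (x i))); congr lnbr; apply: eq_map => i.
by rewrite perm_compE.
Qed.

Lemma iota_permW n m (hm : n <= m) (s : {perm 'I_n}) (i : 'I_n) :
  iota_perm hm s (widen_ord hm i) = widen_ord hm (s i).
Proof. by rewrite permE /ext_fun /= valK. Qed.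

Lemma iota_permH n m (hm : n <= m) (s : {perm 'I_n}) (i : 'I_m) :
  n <= i -> iota_perm hm s i = i.
Proof. by move=> ni; rewrite permE /ext_fun insubN // -leqNgt. Qed.

Lemma part4 n (hn : 0 < n) m (hm : n <= m) (T : {set {perm 'I_n}}) : jacobi T ->
  jacobi [set iota_perm hm tau | tau in T].
Proof.
case: n hn hm T => [//|n] _; case: m => [//|m] hm T HT L a.
rewrite big_imset /=; last first.
  move=> x y _ _ E; apply/permP => i.
  have := congr1 (fun p : {perm _} => p (widen_ord hm i)) E.
  by rewrite !iota_permW => /(congr1 val) /= /val_inj.
pose R := [seq a (inord k) | k <- iota n.+1 (m - n)].
have E x : lnbr [seq a (iota_perm hm x i) | i <- enum 'I_m.+1] =
    foldl (@lr_br L) (lnbr [seq a (widen_ord hm (x i)) | i <- enum 'I_n.+1]) R.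
  rewrite !seq_iota.
  have -> : iota 0 m.+1 = iota 0 n.+1 ++ iota n.+1 (m - n) by rewrite -iotaD addSn (subnKC (hm : n <= m)).
  rewrite map_cat /= -foldl_cat.
  congr (foldl _ _ (_ ++ _)).
  - by rewrite -iota_permW; congr (a (iota_perm _ _ _)); apply: val_inj; rewrite /= !inordK.
  - apply/eq_in_map => k; rewrite mem_iota => /andP[k1 kn].
    rewrite -iota_permW; congr (a (iota_perm _ _ _)); apply: val_inj.
    rewrite /= !inordK //; apply: leq_trans hm; by rewrite ltnS -ltnS.
  - apply/eq_in_map => k; rewrite mem_iota => /andP[k1 kn].
    rewrite iota_permH // inordK //; by rewrite (subnKC hm) in kn.
rewrite (eq_bigr _ (fun x _ => E x)) -fl_sum.
by rewrite (HT L (fun i => a (widen_ord hm i))) fl0.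
Qed.

Lemma part5 n (H G : {group {perm 'I_n}}) : H \subset G -> jacobi H -> jacobi G.
Proof.
move=> sHG HH L a; rewrite (set_partition_big _ (rcosets_partition sHG)) /=.
apply: big1 => A /rcosetsP [g Gg ->]; rewrite -rcosetE /rcoset.
rewrite big_imset /=; last by move=> x y _ _ /mulIg.
rewrite -[RHS](HH L (fun i => a (g i))); apply: eq_bigr => x _.
by congr lnbr; apply: eq_map => i; rewrite permM.
Qed.

Lemma part6 n (h : 1 < n) (G : {group {perm 'I_n}}) :
  tperm (Ordinal (ltnW h)) (Ordinal h) \in G -> jacobi G.
Proof.
case: n h G => [|[|n]] // h G tG.
set t := tperm _ _ in tG.
apply: (part5 (H := <[t]>%G)); first by rewrite cycle_subG.
have t1 : t != 1%g.
  apply/eqP => /permP /(_ (Ordinal (ltnW h))); rewrite perm1 tpermL.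
  by move/(congr1 val).
have ot : #[t] = 2.
  have d : #[t] %| 2 by rewrite order_dvdn expgS expg1 tperm2.
  have g1 : 1 < #[t] by rewrite order_gt1.
  have le := dvdn_leq (isT : 0 < 2) d.
  by case: #[t] d g1 le => [|[|[|k]]].
move=> L a; rewrite /= cycle2g // big_setU1 /= ?big_set1; last first.
  by rewrite inE eq_sym.
have -> : [seq a ((1 : {perm _}) i) | i <- enum 'I_n.+2] = [seq a i | i <- enum 'I_n.+2].
  by apply: eq_map => i; rewrite perm1.
by rewrite /t swap01 GRing.addrN.
Qed.

Lemma lnbr3 (L : lie_ring) n (a : 'I_n.+3 -> L) (p : {perm 'I_n.+3}) (h : 2 < n.+3) :
  (forall i : 'I_n.+3, 2 < i -> p i = i) ->
  lnbr [seq a (p i) | i <- enum 'I_n.+3] =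
  foldl (@lr_br L) (lr_br (lr_br (a (p (Ordinal (ltnW (ltnW h)))))
                                 (a (p (Ordinal (ltnW h))))) (a (p (Ordinal h))))
        [seq a (inord k) | k <- iota 3 n].
Proof.
move=> fix3; rewrite seq_iota /=.
have e0 : inord 0 = Ordinal (ltnW (ltnW h)) :> 'I_n.+3 by apply: val_inj; rewrite /= inordK.
have e1 : inord 1 = Ordinal (ltnW h) :> 'I_n.+3 by apply: val_inj; rewrite /= inordK.
have e2 : inord 2 = Ordinal h :> 'I_n.+3 by apply: val_inj; rewrite /= inordK.
rewrite e0 e1 e2; congr (foldl _ _ _); apply/eq_in_map => k.
rewrite mem_iota => /andP[k3 kn]; rewrite fix3 // inordK //.
Qed.

Lemma part7 n (h : 2 < n) (G : {group {perm 'I_n}}) :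
  perm_comp (tperm (Ordinal (ltnW (ltnW h))) (Ordinal h))
           (tperm (Ordinal (ltnW (ltnW h))) (Ordinal (ltnW h))) \in G ->
  jacobi G.
Proof.
case: n h G => [|[|[|n]]] // h G.
set o0 := Ordinal (ltnW (ltnW h)); set o1 := Ordinal (ltnW h); set o2 := Ordinal h.
set c := perm_comp _ _ => cG.
have n01 : o0 != o1 by rewrite -val_eqE.
have n02 : o0 != o2 by rewrite -val_eqE.
have n12 : o1 != o2 by rewrite -val_eqE.
have c0 : c o0 = o1 by rewrite perm_compE tpermL tpermD // eq_sym.
have c1 : c o1 = o2 by rewrite perm_compE tpermR tpermL.
have c2 : c o2 = o0 by rewrite perm_compE (tpermD n02 n12) tpermR.
have c3 (i : 'I_n.+3) : 2 < i -> c i = i.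
  move=> hi; have ni0 : o0 != i by apply: contraTneq hi => <-.
  have ni1 : o1 != i by apply: contraTneq hi => <-.
  have ni2 : o2 != i by apply: contraTneq hi => <-.
  by rewrite perm_compE !tpermD.
clearbody c.
have ocase (i : 'I_n.+3) : [\/ i = o0, i = o1, i = o2 | 2 < i].
  case: i => [[|[|[|k]]] ki]; [apply: Or41|apply: Or42|apply: Or43|apply: Or44] => //;
  exact: val_inj.
have c3e : c ^+ 3 = 1.
  apply/permP => i; rewrite !expgS expg0 mulg1 !permM perm1.
  case: (ocase i) => [->|->|->|hi]; try by rewrite ?c0 ?c1 ?c2 ?c0 ?c1 ?c2.
  by rewrite !(c3 i hi).
have oc : #[c] = 3.
  have d : #[c] %| 3 by rewrite order_dvdn c3e.
  have g1 : 1 < #[c].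
    by rewrite order_gt1; apply/eqP => /permP /(_ o0); rewrite c0 perm1; apply/eqP.
  have le := dvdn_leq (isT : 0 < 3) d.
  by case: #[c] d g1 le => [|[|[|[|k]]]].
apply: (part5 (H := <[c]>%G)); first by rewrite cycle_subG.
move=> L a /=.
have U : uniq [:: 1; c; c * c].
  rewrite /= !inE !negb_or !andbT; apply/andP; split; [apply/andP; split|]; apply/eqP => /permP /(_ o0);
  rewrite ?perm1 ?permM ?c0 ?c1; apply/eqP; by rewrite // eq_sym.
rewrite (eq_bigl (fun x => x \in [:: 1; c; c * c])); last first.
  by move=> x; rewrite /= cycle_traject oc /= !mulg1.
rewrite -big_uniq // !big_cons big_nil /= GRing.addr0.
rewrite !(@lnbr3 L n a _ h) ?perm1 ?permM ?c0 ?c1 ?c2 ?c0 ?c1 ?c2.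
- by rewrite -!fl_add GRing.addrA lr_jacobi fl0.
- by move=> i hi; rewrite permM !(c3 i hi).
- by move=> i hi; rewrite !(c3 i hi).
- by move=> i hi; rewrite perm1.
Qed.

Close Scope group_scope.

Theorem lemma1 (n : nat) (hn : 0 < n) (T T' : {set {perm 'I_n}})
    (H G : {group {perm 'I_n}}) :
  jacobi T -> jacobi T' -> H \subset G ->
  (* (1) *)
  (T :&: T' = set0 -> jacobi (T :|: T')) /\
  (* (2) *)
  (forall sigma : {perm 'I_n}, jacobi [set perm_comp sigma tau | tau in T]) /\
  (* (3) T(1,2); indices 0,1 here are the paper's 1,2 *)
  (forall h : 1 < n,
     jacobi [set perm_comp tau (tperm (Ordinal (ltnW h)) (Ordinal h)) | tau in T]) /\
  (* (4) *)
  (forall (m : nat) (hm : n <= m), jacobi [set iota_perm hm tau | tau in T]) /\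
  (* (5) *)
  (jacobi H -> jacobi G) /\
  (* (6) *)
  (forall h : 1 < n, tperm (Ordinal (ltnW h)) (Ordinal h) \in G -> jacobi G) /\
  (* (7) the 3-cycle (1,2,3) = (1,3) o (1,2) *)
  (forall h : 2 < n,
     perm_comp (tperm (Ordinal (ltnW (ltnW h))) (Ordinal h))
           (tperm (Ordinal (ltnW (ltnW h))) (Ordinal (ltnW h))) \in G ->
     jacobi G).
Proof.
move=> HT HT' sHG; split; first exact: part1.
split; first by move=> sigma; exact: part2.
split; first by move=> h; exact: part3.
split; first by move=> m hm; exact: part4.
split; first exact: part5.
split; first by move=> h; exact: part6.
by move=> h; exact: part7.
Qed.
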